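(* Let $k$ be a field, $\mathsf{E}$ a locally finite $k$-linear category, and $\mathfrak{P}$ a nonzero left $\mathcal{C}_\mathsf{E}$-contramodule. Then the left $\mathsf{E}$-module $\Theta_\mathsf{E}(\mathfrak{P})$ has a proper big $\mathsf{E}$-submodule.
   Context: A small $k$-linear category $\mathsf{E}$ has $k$-vector spaces $\operatorname{Hom}_\mathsf{E}(x,y)$, $k$-bilinear associative composition and identities with $\mathrm{id}_x\ne0$. A left $\mathsf{E}$-module is a $k$-linear functor $\mathsf{E}\to k\text{-Vect}$. Write $x\preceq y$ if there are $n\ge1$ and objects $x=z_0,\dots,z_n=y$ with $\operatorname{Hom}_\mathsf{E}(z_{i-1},z_i)\neq0$ for all $i$. $\mathsf{E}$ is locally finite if all Hom spaces are finite-dimensional and every $\{z:x\preceq z\preceq y\}$ is finite. A left $\mathsf{E}$-module $T$ is contrafinite if for every object $y$ there is a finite set of objects $A$ such that the action map $\operatorname{Hom}_\mathsf{E}(x,y)\otimes_kT(x)\to T(y)$ vanishes for all $x\notin A$; a submodule $Q\subseteq P$ is big if $P/Q$ is contrafinite. $\mathcal{C}_\mathsf{E}=\bigoplus_{x,y}\mathcal{C}^{x,y}$, $\mathcal{C}^{x,y}=\operatorname{Hom}_\mathsf{E}(x,y)^*$; counit zero on $\mathcal{C}^{x,y}$ for $x\ne y$, evaluation at $\mathrm{id}_x$ on $\mathcal{C}^{x,x}$; comultiplication $\mathcal{C}^{x,y}\to\bigoplus_z\mathcal{C}^{x,z}\otimes\mathcal{C}^{z,y}$ dual to composition $g\otimes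 h\mapsto hg$. A left contramodule over a coalgebra $(\mathcal{C},\mu,\epsilon)$ is a space $\mathfrak{P}$ with $\pi:\operatorname{Hom}_k(\mathcal{C},\mathfrak{P})\to\mathfrak{P}$ such that $\pi(c\mapsto\epsilon(c)p)=p$ and, under $\operatorname{Hom}_k(\mathcal{C},\operatorname{Hom}_k(\mathcal{C},\mathfrak{P}))\cong\operatorname{Hom}_k(\mathcal{C}\otimes\mathcal{C},\mathfrak{P})$, $f\mapsto(c'\otimes c''\mapsto f(c'')(c'))$, $\pi(c\mapsto\pi(f(c)))=\pi(f\circ\mu)$. Set $\varphi\cdot p=\pi(c\mapsto\varphi(c)p)$. With $e_x$ evaluation at $\mathrm{id}_x$ on $\mathcal{C}^{x,x}$ (zero elsewhere) and $\mathrm{ev}_f$, for $f\in\operatorname{Hom}_\mathsf{E}(x,y)$, evaluation at $f$ on $\mathcal{C}^{x,y}$ (zero elsewhere): $\Theta_\mathsf{E}(\mathfrak{P})(x)=e_x\cdot\mathfrak{P}$ (with $\mathfrak{P}\cong\prod_xe_x\cdot\mathfrak{P}$), $f$ acting by $p\mapsto\mathrm{ev}_f\cdot p$. *)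

(* Defs.v *)
From HB Require Import structures.
From mathcomp Require Import all_boot all_order all_algebra.
From mathcomp Require Import boolp classical_sets fsbigop.
Set Implicit Arguments. Unset Strict Implicit. Unset Printing Implicit Defensive.
Import GRing.Theory.
Local Open Scope ring_scope.

(* Objects form a (choice) type, the Hom spaces
   are k-vector spaces; we use vectType (finite-dimensional spaces), since the
   statement only concerns locally finite categories, whose Hom spaces are
   finite-dimensional. *)
Record klinCat (k : fieldType) := KLinCat {
  Obj : choiceType;
  Hom : Obj -> Obj -> vectType k;
  comp : forall x y z, Hom y z -> Hom x y -> Hom x z;
  idm : forall x, Hom x x;
  compDl : forall x y z (a : k) (h1 h2 : Hom y z) (g : Hom x y),
      comp (a *: h1 + h2) g = a *: comp h1 g + comp h2 g;
  compDr : forall x y z (a : k) (h : Hom y z) (g1 g2 : Hom x y),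
      comp h (a *: g1 + g2) = a *: comp h g1 + comp h g2;
  compA : forall x y z w (h : Hom z w) (g : Hom y z) (f : Hom x y),
      comp h (comp g f) = comp (comp h g) f;
  comp1l : forall x y (g : Hom x y), comp (idm y) g = g;
  comp1r : forall x y (g : Hom x y), comp g (idm x) = g;
  idm_neq0 : forall x, idm x != 0
}.
Arguments comp {k} _ {x y z}.
Arguments idm {k} _ x.

Section Defs.
Variables (k : fieldType) (E : klinCat k).
Local Notation Obj := (@Obj k E).
Local Notation Hom := (@Hom k E).

Definition hom_nz (x y : Obj) : Prop := exists g : Hom x y, g != 0.

Definition preceq (x y : Obj) : Prop :=
  exists (n : nat) (zs : nat -> Obj),
    [/\ (0 < n)%N, zs 0%N = x, zs n = y &
        forall i, (i < n)%N -> hom_nz (zs i) (zs i.+1)].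

Definition locally_finite : Prop :=
  forall x y : Obj, exists s : seq Obj,
    forall z, preceq x z -> preceq z y -> z \in s.

Definition dualC (x y : Obj) := 'Hom(Hom x y, k^o).

(* Hom_k(C_E, V) = prod_{x,y} Hom_k(C^{x,y}, V): families of maps,
   required to be linear by [lin_fam]. *)
Definition fam (V : lmodType k) := forall x y : Obj, dualC x y -> V.

Definition linear_fun (U V : lmodType k) (f : U -> V) : Prop :=
  forall (a : k) (u v : U), f (a *: u + v) = a *: f u + f v.

Definition lin_fam (V : lmodType k) (F : fam V) : Prop :=
  forall x y, linear_fun (F x y).

Definition fam_lin (V : lmodType k) (a : k) (F G : fam V) : fam V :=
  fun x y c => a *: F x y c + G x y c.

Definition castHom (x y u v : Obj) (e1 : x = u) (e2 : y = v) (f : Hom x y)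
  : Hom u v :=
  match e1 in _ = u' return Hom u' v with
  | erefl => match e2 in _ = v' return Hom x v' with erefl => f end
  end.

(* the element of C_E^* = prod Hom(u,v) which is f on (x,y) and 0 elsewhere *)
Definition point (x y : Obj) (f : Hom x y) (u v : Obj) : Hom u v :=
  match x =P u, y =P v with
  | ReflectT e1, ReflectT e2 => castHom e1 e2 f
  | _, _ => 0
  end.

(* counit: zero on C^{u,v}, u <> v, evaluation at id_u on C^{u,u} *)
Definition counit (u v : Obj) (c : dualC u v) : k := c (point (idm E u) u v).

Definition dbasis (x y : Obj) (i : 'I_(\dim (fullv : {vspace Hom x y})))
  : dualC x y :=
  linfun (fun g : Hom x y => (coord (vbasis fullv) i g : k^o)).

Definition bas (x y : Obj) (i : 'I_(\dim (fullv : {vspace Hom x y}))) : Hom x y :=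
  tnth (vbasis fullv) i.

(* (f o mu)(c) for c in C^{x,y}, where f in Hom_k(C, Hom_k(C, V)) is
   regarded as the map C (x) C -> V, c' (x) c'' |-> f(c'')(c'), and
   mu(c) = sum_z sum_{i,j} c(h_j g_i) g_i^* (x) h_j^*  (dual to composition,
   g_i, h_j bases of Hom(x,z), Hom(z,y)); the sum over z is finitely
   supported (direct sum). *)
Definition comult_apply (V : lmodType k) (f : forall x y, dualC x y -> fam V)
    (x y : Obj) (c : dualC x y) : V :=
  \sum_(z \in [set: Obj])
    \sum_(i < \dim (fullv : {vspace Hom x z}))
      \sum_(j < \dim (fullv : {vspace Hom z y}))
        ((c (comp E (bas j) (bas i)) : k) *: f z y (dbasis j) x z (dbasis i)).

Record contramodule := Contramodule {
  ccarrier :> lmodType k;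
  cpi : fam ccarrier -> ccarrier;
  cpi_lin : forall (a : k) (F G : fam ccarrier), lin_fam F -> lin_fam G ->
      cpi (fam_lin a F G) = a *: cpi F + cpi G;
  cpi_counit : forall p : ccarrier,
      cpi (fun u v c => counit c *: p) = p;
  cpi_comult : forall f : forall x y, dualC x y -> fam ccarrier,
      (forall x y, forall (a : k) c1 c2,
         f x y (a *: c1 + c2) = fam_lin a (f x y c1) (f x y c2)) ->
      (forall x y c, lin_fam (f x y c)) ->
      cpi (fun x y c => cpi (f x y c)) = cpi (comult_apply f)
}.

Variable P : contramodule.

Definition cact (phi : forall u v : Obj, Hom u v) (p : P) : P :=
  cpi (fun u v c => (c (phi u v) : k) *: p).

(* Theta_E(P)(x) = e_x . P, as a subset of P *)
Definition Theta (x : Obj) (p : P) : Prop :=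
  exists q : P, p = cact (point (idm E x)) q.

Definition Theta_act (x y : Obj) (f : Hom x y) (p : P) : P := cact (point f) p.

Definition is_submodule (Q : Obj -> P -> Prop) : Prop :=
  (forall x p, Q x p -> Theta x p) /\
  (forall x, Q x 0) /\
  (forall x (a : k) p q, Q x p -> Q x q -> Q x (a *: p + q)) /\
  (forall x y (f : Hom x y) p, Q x p -> Q y (Theta_act f p)).

(* Q is big: Theta_E(P)/Q is contrafinite, i.e. for every y there is a finite
   set A of objects such that for x notin A the action map
   Hom(x,y) (x) Theta(x)/Q(x) -> Theta(y)/Q(y) vanishes. *)
Definition big_submodule (Q : Obj -> P -> Prop) : Prop :=
  forall y : Obj, exists A : seq Obj, forall x : Obj, x \notin A ->
    forall (f : Hom x y) (p : P), Theta x p -> Q y (Theta_act f p).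

Definition proper_submodule (Q : Obj -> P -> Prop) : Prop :=
  exists x p, Theta x p /\ ~ Q x p.

End Defs.

(* Main.v *)
Require Import Defs.
From HB Require Import structures.
From mathcomp Require Import all_boot all_order all_algebra.
From mathcomp Require Import boolp classical_sets fsbigop.
Set Implicit Arguments. Unset Strict Implicit. Unset Printing Implicit Defensive.
Import GRing.Theory.
Local Open Scope ring_scope.

Section S.
Variables (k : fieldType) (E : klinCat k).
Local Notation Obj := (@Defs.Obj k E).
Local Notation Hom := (@Defs.Hom k E).
Local Notation comp := (@Defs.comp k E).
Local Notation point := (@Defs.point k E).

Lemma comp0l x y z (g : Hom x y) : comp (0 : Hom y z) g = 0.
Proof.
have := compDl 1 (0 : Hom y z) 0 g. rewrite scaler0 addr0 scale1r.
move=> h; have := congr1 (fun t => t - comp 0 g) h; by rewrite /= addrK subrr => <-.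
Qed.
Lemma comp0r x y z (h : Hom y z) : comp h (0 : Hom x y) = 0.
Proof.
have := compDr 1 h (0 : Hom x y) 0. rewrite scaler0 addr0 scale1r.
move=> h0; have := congr1 (fun t => t - comp h 0) h0; by rewrite /= addrK subrr => <-.
Qed.
Lemma compZl x y z a (h : Hom y z) (g : Hom x y) : comp (a *: h) g = a *: comp h g.
Proof. by have := compDl a h 0 g; rewrite addr0 comp0l addr0. Qed.
Lemma compZr x y z a (h : Hom y z) (g : Hom x y) : comp h (a *: g) = a *: comp h g.
Proof. by have := compDr a h g 0; rewrite addr0 comp0r addr0. Qed.
Lemma compDl1 x y z (h1 h2 : Hom y z) (g : Hom x y) : comp (h1 + h2) g = comp h1 g + comp h2 g.
Proof. by have := compDl 1 h1 h2 g; rewrite !scale1r. Qed.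
Lemma compDr1 x y z (h : Hom y z) (g1 g2 : Hom x y) : comp h (g1 + g2) = comp h g1 + comp h g2.
Proof. by have := compDr 1 h g1 g2; rewrite !scale1r. Qed.

Lemma comp_suml x y z I (r : seq I) (F : I -> Hom y z) (g : Hom x y) :
  comp (\sum_(i <- r) F i) g = \sum_(i <- r) comp (F i) g.
Proof.
apply: (big_rec2 (fun s t => comp s g = t)); first exact: comp0l.
by move=> i a b _ <-; rewrite compDl1.
Qed.
Lemma comp_sumr x y z I (r : seq I) (F : I -> Hom x y) (h : Hom y z) :
  comp h (\sum_(i <- r) F i) = \sum_(i <- r) comp h (F i).
Proof.
apply: (big_rec2 (fun s t => comp h s = t)); first exact: comp0r.
by move=> i a b _ <-; rewrite compDr1.
Qed.

Lemma point_id x y (f : Hom x y) : point f x y = f.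
Proof.
rewrite /Defs.point; case: eqP => [e1|/(_ erefl)//].
case: eqP => [e2|/(_ erefl)//].
by rewrite (eq_irrelevance e1 erefl) (eq_irrelevance e2 erefl).
Qed.
Lemma point_ne x y (f : Hom x y) u v : (x != u) || (y != v) -> point f u v = 0.
Proof.
rewrite /Defs.point; case: eqP => [e1|//]; case: eqP => [e2|//].
by subst.
Qed.
Lemma point0 x y u v : point (0 : Hom x y) u v = 0.
Proof.
rewrite /Defs.point; case: eqP => [e1|//]; case: eqP => [e2|//].
by subst.
Qed.
Lemma pointL x y (a : k) (f g : Hom x y) u v :
  point (a *: f + g) u v = a *: point f u v + point g u v.
Proof.
rewrite /Defs.point; case: eqP => [e1|]; last by rewrite scaler0 addr0.
case: eqP => [e2|]; last by rewrite scaler0 addr0.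
by subst.
Qed.

Lemma famext (V : lmodType k) (F G : fam E V) :
  (forall u v c, F u v c = G u v c) -> F = G.
Proof.
move=> h; apply: functional_extensionality_dep => u.
apply: functional_extensionality_dep => v; apply: funext => c; exact: h.
Qed.

Lemma lf_ev (V : lmodType k) u v (h : Hom u v) (p : V) :
  linear_fun (fun c : dualC u v => (c h : k) *: p).
Proof. by move=> a c1 c2; rewrite add_lfunE scale_lfunE scalerDl scalerA. Qed.

Lemma lf_scale (U V : lmodType k) (b : k) (F : U -> V) :
  linear_fun F -> linear_fun (fun c => b *: F c).
Proof. by move=> hF a c1 c2; rewrite hF scalerDr !scalerA mulrC. Qed.

Lemma lf_sum (U V : lmodType k) I (r : seq I) (F : I -> U -> V) :
  (forall i, linear_fun (F i)) -> linear_fun (fun c => \sum_(i <- r) F i c).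
Proof.
move=> hF a c1 c2; elim: r => [|i r IH]; first by rewrite !big_nil scaler0 addr0.
by rewrite !big_cons IH hF scalerDr addrACA.
Qed.

Lemma lf_const0 (U V : lmodType k) : linear_fun (fun _ : U => (0 : V)).
Proof. by move=> a c1 c2; rewrite scaler0 addr0. Qed.

Variable P : contramodule E.
Local Notation cpi := (@Defs.cpi k E P).
Local Notation cact := (@Defs.cact k E P).

Lemma cpi_add (F G : fam E P) : lin_fam F -> lin_fam G ->
  cpi (fun u v c => F u v c + G u v c) = cpi F + cpi G.
Proof.
move=> hF hG; rewrite -[cpi F]scale1r -cpi_lin //; congr cpi.
by apply: famext => u v c; rewrite /fam_lin scale1r.
Qed.

Lemma cpi0 : cpi (fun _ _ _ => 0) = 0.
Proof.
have h0 : lin_fam (fun (u v : Obj) (_ : dualC u v) => (0 : P)) by move=> u v a c1 c2; rewrite scaler0 addr0.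
have := cpi_add h0 h0.
have -> : (fun (u v : Obj) (c : dualC u v) => (0 : P) + 0) = (fun _ _ _ => 0).
  by apply: famext => u v c; rewrite addr0.
move=> h; have := congr1 (fun t => t - cpi (fun (u v : Obj) (_ : dualC u v) => (0 : P))) h.
by rewrite /= addrK subrr => <-.
Qed.

Lemma cpi_scale (a : k) (F : fam E P) : lin_fam F ->
  cpi (fun u v c => a *: F u v c) = a *: cpi F.
Proof.
move=> hF; have h0 : lin_fam (fun (u v : Obj) (_ : dualC u v) => (0 : P)) by move=> u v b c1 c2; rewrite scaler0 addr0.
have := cpi_lin a hF h0; rewrite cpi0 addr0 => <-; congr cpi.
by apply: famext => u v c; rewrite /fam_lin addr0.
Qed.

Lemma lin_fam_sum I (r : seq I) (F : I -> fam E P) : (forall i, lin_fam (F i)) ->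
  lin_fam (fun u v c => \sum_(i <- r) F i u v c).
Proof. by move=> hF u v; apply: lf_sum => i; exact: hF. Qed.

Lemma cpi_sum I (r : seq I) (F : I -> fam E P) : (forall i, lin_fam (F i)) ->
  cpi (fun u v c => \sum_(i <- r) F i u v c) = \sum_(i <- r) cpi (F i).
Proof.
move=> hF; elim: r => [|i r IH].
  by rewrite big_nil -[RHS]cpi0; congr cpi; apply: famext => u v c; rewrite big_nil.
rewrite big_cons -IH -cpi_add //; last exact: lin_fam_sum.
by congr cpi; apply: famext => u v c; rewrite big_cons.
Qed.


Lemma hom_nz_preceq (x y : Obj) : hom_nz x y -> preceq x y.
Proof.
move=> h; exists 1%N, (fun i => if i is 0%N then x else y); split => //.
by case.
Qed.

Lemma preceq_refl (x : Obj) : preceq x x.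
Proof. by apply: hom_nz_preceq; exists (idm E x); exact: idm_neq0. Qed.

Lemma preceq_trans (x y z : Obj) : preceq x y -> preceq y z -> preceq x z.
Proof.
move=> [n1 [zs1 [n1p z10 z1n h1]]] [n2 [zs2 [n2p z20 z2n h2]]].
pose zs i := if (i <= n1)%N then zs1 i else zs2 (i - n1)%N.
have zsR i : (n1 <= i)%N -> zs i = zs2 (i - n1)%N.
  rewrite /zs => le; case: ifP => // le'.
  have -> : i = n1 by apply/eqP; rewrite eqn_leq le le'.
  by rewrite subnn z1n z20.
exists (n1 + n2)%N, zs; split.
- by rewrite addn_gt0 n1p.
- by rewrite /zs leq0n.
- by rewrite zsR ?leq_addr // addKn.
move=> i lti; case: (ltnP i n1) => [lt1|ge1].
  by rewrite /zs (ltnW lt1) lt1; exact: h1.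
rewrite !zsR ?(leq_trans ge1) // subSn //; apply: h2.
by rewrite ltn_subLR // addnC.
Qed.

Variable lf : locally_finite E.

Definition Sl (x y : Obj) : seq Obj := undup (projT1 (cid (lf x y))).

Lemma Sl_uniq (x y : Obj) : uniq (Sl x y).
Proof. exact: undup_uniq. Qed.

Lemma Sl_in (x y z : Obj) : preceq x z -> preceq z y -> z \in Sl x y.
Proof.
by move=> h1 h2; rewrite /Sl mem_undup; apply: (projT2 (cid (lf x y))).
Qed.

Lemma dim0 (x y : Obj) : ~ hom_nz x y -> \dim (fullv : {vspace Hom x y}) = 0%N.
Proof.
move=> h; apply/eqP; rewrite dimv_eq0; apply/eqP/vspaceP => v.
rewrite memvf memv0; apply/esym/eqP.
by apply: contrapT => hv; apply: h; exists v; apply/eqP.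
Qed.

Lemma ord_empty n (i : 'I_n) : n = 0%N -> False.
Proof. by case: i => m hm e; rewrite e in hm. Qed.

Lemma comultE (V : lmodType k) (f : forall x y, dualC x y -> fam E V) (x y : Obj) (c : dualC x y) :
  comult_apply f c = \sum_(z <- Sl x y)
    \sum_(i < \dim (fullv : {vspace Hom x z}))
      \sum_(j < \dim (fullv : {vspace Hom z y}))
        ((c (comp (bas j) (bas i)) : k) *: f z y (dbasis j) x z (dbasis i)).
Proof.
rewrite /comult_apply (fsbigE (Sl x y)) //; last first.
  move=> z _ zn; case: (pselect (hom_nz x z)) => hxz.
    2: by apply: big1 => i _; case: (ord_empty i (dim0 hxz)).
  case: (pselect (hom_nz z y)) => hzy.
    2: by apply: big1 => i _; apply: big1 => j _; case: (ord_empty j (dim0 hzy)).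
  by move: zn; rewrite Sl_in // ; apply: hom_nz_preceq.
  exact: Sl_uniq.
by apply: eq_bigl => z; rewrite in_setT.
Qed.

Lemma basis_id (V : lmodType k) (x z y : Obj) (a : Hom z y) (b : Hom x z) (c : dualC x y) (p : V) :
 \sum_(i < \dim (fullv : {vspace Hom x z})) \sum_(j < \dim (fullv : {vspace Hom z y}))
   ((c (comp (bas j) (bas i)) : k) *: ((dbasis j a : k) *: ((dbasis i b : k) *: p)))
 = (c (comp a b) : k) *: p.
Proof.
rewrite {2}(coord_vbasis (memvf a)) {2}(coord_vbasis (memvf b)).
rewrite comp_suml linear_sum scaler_suml exchange_big /=; apply: eq_bigr => j _.
rewrite comp_sumr linear_sum scaler_suml /=; apply: eq_bigr => i _.
rewrite compZl compZr !linearZ /= /dbasis !lfunE /= /bas !(tnth_nth 0).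
by rewrite !scalerA.
Qed.


Lemma cact_mul (phi : forall z y : Obj, Hom z y) (psi : forall y u v : Obj, Hom u v) (p : P) :
  cpi (fun (z y : Obj) (c2 : dualC z y) => (c2 (phi z y) : k) *: cact (psi y) p)
  = cpi (fun (x y : Obj) (c : dualC x y) =>
       (c (\sum_(z <- Sl x y) comp (phi z y) (psi y x z)) : k) *: p).
Proof.
pose f := fun (z y : Obj) (c2 : dualC z y) =>
  ((fun (u v : Obj) (c1 : dualC u v) => (c2 (phi z y) : k) *: ((c1 (psi y u v) : k) *: p)) : fam E P).
have H2 : forall x y c, lin_fam (f x y c).
  by move=> x y c u v; apply: lf_scale; apply: lf_ev.
have H1 : forall x y (a : k) c1 c2, f x y (a *: c1 + c2) = fam_lin a (f x y c1) (f x y c2).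
  by move=> x y a c1 c2; apply: famext => u v c; rewrite /fam_lin /f lf_ev.
have := cpi_comult H1 H2.
have -> : (fun (x y : Obj) (c : dualC x y) => cpi (f x y c)) =
          (fun (z y : Obj) (c2 : dualC z y) => (c2 (phi z y) : k) *: cact (psi y) p).
  apply: famext => z y c2; rewrite /f cpi_scale //.
  by move=> u v; apply: lf_ev.
move=> ->; congr cpi; apply: famext => x y c.
rewrite comultE linear_sum scaler_suml; apply: eq_bigr => z _.
by rewrite /f basis_id.
Qed.


Lemma sum_point_comp (a b d : Obj) (g : Hom b d) (f : Hom a b) (x y : Obj) :
  \sum_(z <- Sl x y) comp (point g z y) (point f x z) = point (comp g f) x y.
Proof.
case: (eqVneq g 0) => [->|gnz].
  by rewrite comp0l point0 big1 // => z _; rewrite point0 comp0l.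
case: (eqVneq f 0) => [->|fnz].
  by rewrite comp0r point0 big1 // => z _; rewrite point0 comp0r.
case: (eqVneq x a) => [exa|xa]; last first.
  rewrite point_ne ?(eq_sym a) ?xa // big1 // => z _.
  by rewrite (@point_ne _ _ f) ?comp0r // eq_sym xa.
case: (eqVneq y d) => [eyd|yd]; last first.
  rewrite point_ne ?(eq_sym d) ?yd ?orbT // big1 // => z _.
  by rewrite (@point_ne _ _ g) ?comp0l // (eq_sym d) yd orbT.
subst x y; rewrite point_id (bigD1_seq b) /=; last exact: Sl_uniq.
  rewrite !point_id big1 ?addr0 // => z zb.
  by rewrite (@point_ne _ _ g) ?comp0l // eq_sym zb.
by apply: Sl_in; apply: hom_nz_preceq; [exists f|exists g].
Qed.

Lemma sum_point_id (x y : Obj) :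
  \sum_(z <- Sl x y) comp (point (idm E z) z y) (point (idm E y) x z) = point (idm E x) x y.
Proof.
case: (eqVneq x y) => [<-|xy].
  rewrite (bigD1_seq x) /=; [|by apply: Sl_in; apply: preceq_refl|exact: Sl_uniq].
  rewrite !point_id comp1l big1 ?addr0 // => z zx.
  by rewrite (@point_ne _ _ (idm E z)) ?comp0l // zx orbT.
rewrite (@point_ne _ _ (idm E x)) ?xy ?orbT // big1 // => z _.
case: (eqVneq z y) => [->|zy].
  by rewrite (@point_ne _ _ (idm E y) x) ?comp0r // eq_sym xy.
by rewrite (@point_ne _ _ (idm E z) z) ?comp0l // zy orbT.
Qed.

Lemma decomp (p : P) : (forall y, cact (point (idm E y)) p = 0) -> p = 0.
Proof.
move=> h; rewrite -(cpi_counit p).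
have -> : (fun (u v : Obj) (c : dualC u v) => counit c *: p) =
  (fun (x y : Obj) (c : dualC x y) =>
       (c (\sum_(z <- Sl x y) comp (point (idm E z) z y) (point (idm E y) x z)) : k) *: p).
  by apply: famext => x y c; rewrite sum_point_id.
rewrite -(cact_mul (fun z y => point (idm E z) z y) (fun y u v => point (idm E y) u v)).
rewrite -[RHS]cpi0; congr cpi; apply: famext => z y c.
by rewrite h scaler0.
Qed.

Lemma cact_comp (a b d : Obj) (g : Hom b d) (f : Hom a b) (p : P) :
  cact (point g) (cact (point f) p) = cact (point (comp g f)) p.
Proof.
rewrite {1}/Defs.cact (cact_mul (fun z y => point g z y) (fun _ u v => point f u v)).
rewrite /Defs.cact; congr cpi; apply: famext => x y c.
by rewrite sum_point_comp.
Qed.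


Lemma cact_lin (phi : forall u v : Obj, Hom u v) (a : k) (p q : P) :
  cact phi (a *: p + q) = a *: cact phi p + cact phi q.
Proof.
rewrite /Defs.cact -cpi_lin; last 2 first.
- by move=> u v; apply: lf_ev.
- by move=> u v; apply: lf_ev.
congr cpi; apply: famext => u v c.
by rewrite /fam_lin scalerDr !scalerA mulrC.
Qed.

Lemma cact0 (phi : forall u v : Obj, Hom u v) : cact phi 0 = 0.
Proof.
by rewrite /Defs.cact -[RHS]cpi0; congr cpi; apply: famext => u v c; rewrite scaler0.
Qed.

Lemma cactZ (phi : forall u v : Obj, Hom u v) (a : k) (p : P) :
  cact phi (a *: p) = a *: cact phi p.
Proof. by have := cact_lin phi a p 0; rewrite !addr0 cact0 addr0. Qed.

Lemma cact_sum (phi : forall u v : Obj, Hom u v) I (r : seq I) (F : I -> P) :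
  cact phi (\sum_(i <- r) F i) = \sum_(i <- r) cact phi (F i).
Proof.
elim: r => [|i r IH]; first by rewrite !big_nil cact0.
by rewrite !big_cons -[F i]scale1r cact_lin IH !scale1r.
Qed.

Lemma cact_point0 (x y : Obj) (p : P) : cact (point (0 : Hom x y)) p = 0.
Proof.
rewrite /Defs.cact -[RHS]cpi0; congr cpi; apply: famext => u v c.
by rewrite point0 linear0 scale0r.
Qed.

Lemma Theta_e (y : Obj) (q : P) : Theta y q -> cact (point (idm E y)) q = q.
Proof. by move=> [q' ->]; rewrite cact_comp comp1l. Qed.

Lemma Theta_act_in (x y : Obj) (f : Hom x y) (p : P) : Theta y (Theta_act f p).
Proof. by exists (Theta_act f p); rewrite /Theta_act cact_comp comp1l. Qed.

Lemma Theta0 (y : Obj) : Theta y (0 : P).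
Proof. by exists 0; rewrite cact0. Qed.

Lemma ThetaD (y : Obj) (a : k) (p q : P) : Theta y p -> Theta y q -> Theta y (a *: p + q).
Proof. by move=> [p' ->] [q' ->]; exists (a *: p' + q'); rewrite cact_lin. Qed.

End S.

Fixpoint AllP {T : Type} (Pr : T -> Prop) (s : seq T) : Prop :=
  if s is t :: s' then Pr t /\ AllP Pr s' else True.

Lemma AllP_impl {T : Type} (P1 P2 : T -> Prop) s :
  (forall t, P1 t -> P2 t) -> AllP P1 s -> AllP P2 s.
Proof. by move=> h; elim: s => //= t s IH [/h ? /IH]. Qed.

Lemma AllP_cat {T : Type} (Pr : T -> Prop) s1 s2 :
  AllP Pr s1 -> AllP Pr s2 -> AllP Pr (s1 ++ s2).
Proof. by elim: s1 => //= t s IH [? h] h2; split => //; apply: IH. Qed.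

Lemma AllP_map {T U : Type} (Pr : U -> Prop) (f : T -> U) s :
  AllP (fun t => Pr (f t)) s -> AllP Pr (map f s).
Proof. by elim: s => //= t s IH [? /IH]. Qed.

Lemma AllP_flatten {T : Type} (Pr : T -> Prop) ss :
  AllP (AllP Pr) ss -> AllP Pr (flatten ss).
Proof. by elim: ss => //= s ss IH [? /IH]; apply: AllP_cat. Qed.

Lemma AllP_filter {T : Type} (Pr : T -> Prop) (b : pred T) s :
  AllP Pr s -> AllP (fun t => b t /\ Pr t) (filter b s).
Proof. by elim: s => //= t s IH [? /IH]; case: ifP. Qed.

Lemma AllP_eq_big {T : Type} (V : nmodType) (F G : T -> V) s :
  AllP (fun t => F t = G t) s -> \sum_(t <- s) F t = \sum_(t <- s) G t.
Proof. by elim: s => [|t s IH] /=; [rewrite !big_nil|move=> [e /IH]; rewrite !big_cons e => ->]. Qed.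
Section S2.
Variables (k : fieldType) (E : klinCat k).
Local Notation Obj := (@Defs.Obj k E).
Local Notation Hom := (@Defs.Hom k E).
Local Notation comp := (@Defs.comp k E).
Local Notation point := (@Defs.point k E).
Variable P : contramodule E.
Local Notation cpi := (@Defs.cpi k E P).
Local Notation cact := (@Defs.cact k E P).
Variable lf : locally_finite E.

Lemma ext2 (V : lmodType k) (A B : forall z y : Obj, dualC z y -> fam E V) :
  (forall z y c2 u v c1, A z y c2 u v c1 = B z y c2 u v c1) -> A = B.
Proof.
move=> h; apply: functional_extensionality_dep => z.
apply: functional_extensionality_dep => y; apply: funext => c2; apply: famext => u v c1.
exact: h.
Qed.

Lemma comult_prod (V : lmodType k) (phi : forall z y : Obj, Hom z y)
   (psi : forall y u v : Obj, Hom u v) (p : V) (x y : Obj) (c : dualC x y) :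
  comult_apply (fun (z y : Obj) (c2 : dualC z y) (u v : Obj) (c1 : dualC u v) =>
     (c2 (phi z y) : k) *: ((c1 (psi y u v) : k) *: p)) c
  = (c (\sum_(z <- Sl lf x y) comp (phi z y) (psi y x z)) : k) *: p.
Proof.
rewrite (comultE lf) linear_sum scaler_suml; apply: eq_bigr => z _.
by rewrite basis_id.
Qed.

Lemma comult_add (V : lmodType k) (A B : forall z y : Obj, dualC z y -> fam E V)
    (x y : Obj) (c : dualC x y) :
  comult_apply (fun z y c2 u v c1 => A z y c2 u v c1 + B z y c2 u v c1) c
  = comult_apply A c + comult_apply B c.
Proof.
rewrite !(comultE lf) -big_split; apply: eq_bigr => z _.
rewrite -big_split; apply: eq_bigr => i _.
by rewrite -big_split; apply: eq_bigr => j _; rewrite scalerDr.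
Qed.

Lemma comult_zero (V : lmodType k) (x y : Obj) (c : dualC x y) :
  comult_apply (fun (z y : Obj) (c2 : dualC z y) (u v : Obj) (c1 : dualC u v) => (0 : V)) c = 0.
Proof.
rewrite (comultE lf) big1 // => z _; rewrite big1 // => i _; rewrite big1 // => j _.
by rewrite scaler0.
Qed.

Lemma comult_sum (V : lmodType k) I (r : seq I) (H : I -> forall z y : Obj, dualC z y -> fam E V)
    (x y : Obj) (c : dualC x y) :
  comult_apply (fun z y c2 u v c1 => \sum_(i <- r) H i z y c2 u v c1) c
  = \sum_(i <- r) comult_apply (H i) c.
Proof.
elim: r => [|i r IH].
  rewrite big_nil -[RHS](comult_zero V c); apply: (congr1 (fun F => comult_apply F c)).
  by apply: ext2 => *; rewrite big_nil.
rewrite big_cons -IH -comult_add; apply: (congr1 (fun F => comult_apply F c)).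
by apply: ext2 => *; rewrite big_cons.
Qed.

Lemma ThetaZ (y : Obj) (a : k) (p : P) : Theta y p -> Theta y (a *: p).
Proof. by move=> h; rewrite -[_ *: _]addr0; apply: ThetaD => //; apply: Theta0. Qed.

Definition Qm (y : Obj) (q : P) : Prop :=
  Theta y q /\ exists s : seq {x : Obj & (Hom x y * P)%type},
    AllP (fun t => ~ preceq y (tag t) /\ Theta (tag t) (tagged t).2) s /\
    q = \sum_(t <- s) Theta_act (tagged t).1 (tagged t).2.

Lemma Qm0 (y : Obj) : Qm y 0.
Proof. by split; [exact: Theta0|exists [::]; rewrite big_nil]. Qed.

Lemma Qm_sub : is_submodule Qm.
Proof.
split; first by move=> x p [].
split; first exact: Qm0.
split.
  move=> x a p q [Tp [s1 [A1 e1]]] [Tq [s2 [A2 e2]]]; split; first exact: ThetaD.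
  exists (map (fun t => existT (fun x' => (Hom x' x * P)%type) (tag t) ((tagged t).1, a *: (tagged t).2)) s1 ++ s2).
  split.
    apply: AllP_cat => //; apply: AllP_map; apply: (AllP_impl _ A1) => t [h1 h2] /=.
    by split => //; apply: ThetaZ.
  rewrite big_cat big_map /= e1 e2 scaler_sumr; congr (_ + _); apply: eq_bigr => t _.
  by rewrite /Theta_act cactZ.
move=> x y f p [Tp [s [A e]]].
case: (eqVneq f 0) => [->|fnz]; first by rewrite /Theta_act cact_point0; exact: Qm0.
split; first exact: Theta_act_in.
exists (map (fun t => existT (fun x' => (Hom x' y * P)%type) (tag t) (comp f (tagged t).1, (tagged t).2)) s).
split.
  apply: AllP_map; apply: (AllP_impl _ A) => t [h1 h2] /=; split => // hy; apply: h1.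
  by apply: preceq_trans hy; apply: hom_nz_preceq; exists f.
rewrite e /Theta_act cact_sum big_map; apply: eq_bigr => t _ /=.
by rewrite (cact_comp lf).
Qed.

Lemma Qm_big : big_submodule Qm.
Proof.
move=> y; exists (Sl lf y y) => x xn f p Tp.
case: (eqVneq f 0) => [->|fnz]; first by rewrite /Theta_act cact_point0; exact: Qm0.
split; first exact: Theta_act_in.
exists [:: existT (fun x' => (Hom x' y * P)%type) x (f, p)]; split; last by rewrite big_seq1.
split => //; split => // hyx; move/negP: xn; apply; apply: Sl_in => //.
by apply: hom_nz_preceq; exists f.
Qed.

End S2.
Lemma widen_sum (V : nmodType) (F : nat -> V) (N M : nat) : (N <= M)%N ->
  (forall n, (N <= n)%N -> F n = 0) -> \sum_(n < N) F n = \sum_(n < M) F n.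
Proof.
move=> NM F0; rewrite -!(big_mkord xpredT) (@big_cat_nat _ _ _ N 0 M) //=.
rewrite [X in _ + X]big1_seq ?addr0 // => n /andP [_]; rewrite mem_index_iota => /andP [h _].
exact: F0.
Qed.

Section Nak.
Variables (k : fieldType) (E : klinCat k).
Local Notation Obj := (@Defs.Obj k E).
Local Notation Hom := (@Defs.Hom k E).
Local Notation comp := (@Defs.comp k E).
Local Notation point := (@Defs.point k E).
Variable P : contramodule E.
Local Notation cpi := (@Defs.cpi k E P).
Local Notation cact := (@Defs.cact k E P).
Variable lf : locally_finite E.
Hypothesis HQ : forall (y : Obj) (q : P), Theta y q -> Qm y q.

Definition condD (x : Obj) (q : P) (s : seq {x' : Obj & (Hom x' x * P)%type}) : Prop :=
  AllP (fun u => (tagged u).1 != 0 /\ ~ preceq x (tag u) /\ Theta (tag u) (tagged u).2) s /\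
  q = \sum_(u <- s) Theta_act (tagged u).1 (tagged u).2.

Arguments condD x q s : clear implicits.
Lemma cond_ex (x : Obj) (q : P) : exists s, Theta x q -> condD x q s.
Proof.
case: (pselect (Theta x q)) => h; last by exists [::].
have [_ [s [A e]]] := HQ h.
exists (filter (fun u => (tagged u).1 != 0) s) => _; split.
  by apply: AllP_impl (AllP_filter _ A) => u [h1 [h2 h3]].
rewrite e big_filter [RHS]big_mkcond; apply: eq_bigr => u _; case: ifP => // /negbFE/eqP ->.
by rewrite /Theta_act cact_point0.
Qed.

Definition D (x : Obj) (q : P) := projT1 (cid (cond_ex x q)).
Lemma hD (x : Obj) (q : P) : Theta x q -> condD x q (D x q).
Proof. exact: (projT2 (cid (cond_ex x q))). Qed.

Variables (y0 : Obj) (q0 : P).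
Hypothesis Tq0 : Theta y0 q0.

Local Notation T := {x : Obj & (Hom x y0 * P)%type}.
Definition ext (t : T) (u : {x' : Obj & (Hom x' (tag t) * P)%type}) : T :=
  existT (fun x => (Hom x y0 * P)%type) (tag u) (comp (tagged t).1 (tagged u).1, (tagged u).2).
Arguments ext t u : clear implicits.
Definition step (L : seq T) : seq T :=
  flatten (map (fun t => map (ext t) (D (tag t) (tagged t).2)) L).
Definition Lseq n := iter n step [:: existT (fun x => (Hom x y0 * P)%type) y0 (idm E y0, q0)].

Definition Inv n (t : T) := Theta (tag t) (tagged t).2 /\ preceq (tag t) y0 /\
  exists ch : seq Obj, [/\ uniq ch, size ch = n.+1 &
    forall w, w \in ch -> preceq (tag t) w /\ preceq w y0].

Lemma inv_L n : AllP (Inv n) (Lseq n).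
Proof.
elim: n => [|n IH] /=.
  split => //; split => //; split; first exact: preceq_refl.
  exists [:: y0]; split => // w; rewrite inE => /eqP ->; split; exact: preceq_refl.
apply: AllP_flatten; apply: AllP_map; apply: (AllP_impl _ IH) => t [Tt [ty0 [ch [uch sch hch]]]].
have [A _] := hD Tt; apply: AllP_map; apply: (AllP_impl _ A) => u [gnz [nxu Tu]] /=.
have ux : preceq (tag u) (tag t) by apply: hom_nz_preceq; exists (tagged u).1.
split => //; split; first exact: preceq_trans ux ty0.
exists (tag u :: ch); split => /=.
- by rewrite uch andbT; apply/negP => /hch [h _]; exact: nxu h.
- by rewrite sch.
move=> w; rewrite inE => /orP [/eqP ->|/hch [h1 h2]]; split => //.
- exact: preceq_refl.
- exact: preceq_trans ux ty0.
- exact: preceq_trans ux h1.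
Qed.

Definition N (u : Obj) := size (Sl lf u y0).

Lemma depth n t : Inv n t -> (n < N (tag t))%N.
Proof.
move=> [_ [_ [ch [uch sch hch]]]]; rewrite -ltnS -sch /N ltnS.
apply: uniq_leq_size => // w /hch [h1 h2]; exact: Sl_in.
Qed.

Lemma far n (u : Obj) : (N u <= n)%N -> AllP (fun t => tag t != u) (Lseq n).
Proof.
move=> h; apply: AllP_impl (inv_L n) => t /depth ht; apply/eqP => e.
by move: ht; rewrite e ltnNge h.
Qed.


Definition Fn n : fam E P := fun (u v : Obj) (c : dualC u v) =>
  \sum_(t <- Lseq n) (c (point (tagged t).1 u v) : k) *: (tagged t).2.

Definition Gn n : forall z y : Obj, dualC z y -> fam E P :=
  fun (z y : Obj) (c2 : dualC z y) (u v : Obj) (c1 : dualC u v) =>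
  \sum_(t <- Lseq n) (c2 (point (tagged t).1 z y) : k) *:
     \sum_(w <- D (tag t) (tagged t).2) (c1 (point (tagged w).1 u v) : k) *: (tagged w).2.

Arguments Fn n x y c : clear implicits.
Arguments Gn : clear implicits.

Lemma Fn_far n (u v : Obj) (c : dualC u v) : (N u <= n)%N -> Fn n u v c = 0.
Proof.
move=> h; rewrite /Fn (@AllP_eq_big _ _ _ (fun _ => 0)) ?big1 //.
apply: AllP_impl (far h) => t tu.
by rewrite point_ne ?linear0 ?scale0r // tu.
Qed.

Lemma Gn_far n (z y : Obj) (c2 : dualC z y) (u v : Obj) (c1 : dualC u v) :
  (N z <= n)%N -> Gn n z y c2 u v c1 = 0.
Proof.
move=> h; rewrite /Gn (@AllP_eq_big _ _ _ (fun _ => 0)) ?big1 //.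
apply: AllP_impl (far h) => t tu.
by rewrite point_ne ?linear0 ?scale0r // tu.
Qed.

Lemma lin_Fn n : lin_fam (Fn n).
Proof. by move=> u v; apply: lf_sum => t; apply: lf_ev. Qed.

Lemma cpi_list (x : Obj) (s : seq {x' : Obj & (Hom x' x * P)%type}) :
  cpi (fun (u v : Obj) (c1 : dualC u v) =>
     \sum_(w <- s) (c1 (point (tagged w).1 u v) : k) *: (tagged w).2)
  = \sum_(w <- s) Theta_act (tagged w).1 (tagged w).2.
Proof.
rewrite (@cpi_sum _ _ P _ _ (fun w (u v : Obj) (c1 : dualC u v) =>
   (c1 (point (tagged w).1 u v) : k) *: (tagged w).2)) //.
by move=> w u v; apply: lf_ev.
Qed.

Lemma cpi_Gn n (z y : Obj) (c2 : dualC z y) : cpi (Gn n z y c2) = Fn n z y c2.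
Proof.
rewrite /Gn (@cpi_sum _ _ P _ _ (fun t (u v : Obj) (c1 : dualC u v) =>
  (c2 (point (tagged t).1 z y) : k) *:
     \sum_(w <- D (tag t) (tagged t).2) (c1 (point (tagged w).1 u v) : k) *: (tagged w).2)); last first.
  by move=> t u v; apply: lf_scale; apply: lf_sum => w; apply: lf_ev.
rewrite /Fn; apply: AllP_eq_big; apply: AllP_impl (inv_L n) => t [Tt _].
rewrite cpi_scale; last by move=> u v; apply: lf_sum => w; apply: lf_ev.
by rewrite cpi_list; have [_ <-] := hD Tt.
Qed.


Lemma comult_Gn n (x y : Obj) (c : dualC x y) : comult_apply (Gn n) c = Fn n.+1 x y c.
Proof.
have -> : Gn n = (fun (z y : Obj) (c2 : dualC z y) (u v : Obj) (c1 : dualC u v) =>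
   \sum_(t <- Lseq n) (fun t (z y : Obj) (c2 : dualC z y) (u v : Obj) (c1 : dualC u v) =>
      \sum_(w <- D (tag t) (tagged t).2) (c2 (point (tagged t).1 z y) : k) *:
          ((c1 (point (tagged w).1 u v) : k) *: (tagged w).2)) t z y c2 u v c1).
  by apply: ext2 => z y' c2 u v c1; rewrite /Gn; apply: eq_bigr => t _; rewrite scaler_sumr.
rewrite (comult_sum lf) /Fn /= /step big_flatten big_map; apply: eq_bigr => t _.
rewrite big_map /= (comult_sum lf); apply: eq_bigr => w _.
rewrite (comult_prod lf (fun z y => point (tagged t).1 z y) (fun _ u v => point (tagged w).1 u v)).
by rewrite sum_point_comp.
Qed.


Definition Phi : fam E P := fun (u v : Obj) (c : dualC u v) => \sum_(n < N u) Fn n u v c.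
Definition Psi : fam E P := fun (u v : Obj) (c : dualC u v) => \sum_(n < N u) Fn n.+1 u v c.
Definition G : forall z y : Obj, dualC z y -> fam E P :=
  fun (z y : Obj) (c2 : dualC z y) (u v : Obj) (c1 : dualC u v) =>
  \sum_(n < N z) Gn n z y c2 u v c1.

Arguments Phi : clear implicits.
Arguments Psi : clear implicits.
Arguments G : clear implicits.

Lemma Phi_split (u v : Obj) (c : dualC u v) : Phi u v c = Fn 0 u v c + Psi u v c.
Proof.
rewrite /Phi /Psi /=. rewrite -(big_mkord xpredT (fun n => Fn n u v c)) -(big_mkord xpredT (fun n => Fn n.+1 u v c)); case e: (N u) => [|m].
  by rewrite !big_geq // Fn_far ?e // addr0.
rewrite big_nat_recl // big_nat_recr //= [Fn m.+1 u v c]Fn_far ?e // addr0.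
by congr (_ + _); apply: eq_bigl.
Qed.

Lemma cpi_G (z y : Obj) (c2 : dualC z y) : cpi (G z y c2) = Phi z y c2.
Proof.
rewrite /G /= (@cpi_sum _ _ P _ _ (fun (n : 'I_(N z)) (u v : Obj) (c1 : dualC u v) => Gn n z y c2 u v c1)).
  by apply: eq_bigr => n _; rewrite cpi_Gn.
by move=> n u v; apply: lf_sum => t; apply: lf_scale; apply: lf_sum => w; apply: lf_ev.
Qed.

Lemma comult_G (x y : Obj) (c : dualC x y) : comult_apply G c = Psi x y c.
Proof.
pose M := (N x + \sum_(z <- Sl lf x y) N z)%N.
have NzM : forall z, z \in Sl lf x y -> (N z <= M)%N.
  move=> z zS; rewrite /M (bigD1_seq z) //=; last exact: Sl_uniq.
  by rewrite addnCA leq_addr.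
transitivity (comult_apply (fun (z y : Obj) (c2 : dualC z y) (u v : Obj) (c1 : dualC u v) =>
   \sum_(n < M) Gn n z y c2 u v c1) c).
  rewrite !(comultE lf) big_seq [RHS]big_seq; apply: eq_bigr => z zS.
  apply: eq_bigr => i _; apply: eq_bigr => j _; congr (_ *: _).
  rewrite /G (widen_sum (F := fun n => Gn n z y _ x z _) (NzM z zS)) // => n hn.
  exact: Gn_far.
rewrite (comult_sum lf); under eq_bigr do rewrite comult_Gn.
rewrite /Psi /= (@widen_sum _ (fun n => Fn n.+1 x y c) (N x) M (leq_addr _ _)) // => n hn.
by apply: Fn_far; apply: leq_trans hn _.
Qed.

Lemma nakayama : q0 = 0.
Proof.
have linPsi : lin_fam Psi by move=> u v; apply: lf_sum => n; apply: lin_Fn.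
have e1 : cpi Phi = cpi (Fn 0) + cpi Psi.
  rewrite -cpi_add //; last exact: lin_Fn.
  by congr cpi; apply: famext => u v c; rewrite Phi_split.
have H2 : forall z y c2, lin_fam (G z y c2).
  move=> z y c2 u v; apply: lf_sum => n; apply: lf_sum => t; apply: lf_scale.
  by apply: lf_sum => w; apply: lf_ev.
have H1 : forall (z y : Obj) (a : k) (c1 c2 : dualC z y),
    G z y (a *: c1 + c2) = fam_lin a (G z y c1) (G z y c2).
  move=> z y a c1 c2; apply: famext => u v c.
  have L : linear_fun (fun c2 : dualC z y => G z y c2 u v c).
    by apply: lf_sum => n; apply: lf_sum => t; apply: lf_ev.
  exact: L.
have e2 : cpi Psi = cpi Phi.
  have -> : Psi = (fun (x y : Obj) (c : dualC x y) => comult_apply G c).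
    by apply: famext => x y c; rewrite comult_G.
  rewrite -(cpi_comult H1 H2); congr cpi; apply: famext => z y c2.
  by rewrite cpi_G.
have e3 : cpi (Fn 0) = 0.
  move: e1; rewrite e2 => /(congr1 (fun t => t - cpi Phi)).
  by rewrite subrr addrK.
rewrite -e3 -{1}(Theta_e lf Tq0) /Defs.cact; congr cpi; apply: famext => u v c.
by rewrite /Fn /= big_seq1.
Qed.

End Nak.

Unset Implicit Arguments.

Theorem lemma4p11 (k : fieldType) (E : klinCat k) (P : contramodule E) :
  locally_finite E ->
  (exists p : P, p != 0) ->
  exists Q : Obj E -> P -> Prop,
    [/\ is_submodule Q, big_submodule Q & proper_submodule Q].
Proof.
move=> lf [p pnz]; exists (@Qm k E P); split.
- exact: Qm_sub.
- exact: Qm_big.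
apply: contrapT => hnp.
have HQ : forall (y : Obj E) (q : P), Theta y q -> Qm y q.
  move=> y q Tq; apply: contrapT => nq; apply: hnp; exists y, q; split => //.
move/eqP: pnz; apply; apply: (decomp lf) => y.
apply: (nakayama lf HQ (y0 := y)).
by exists p.
Qed.
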